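(* Suppose Assumptions 1–5 hold and the set $\Theta^*$ of equilibrium models is finite. Write $\Theta^*\cup\{0,1\}=\{\theta_0,\theta_1,\dots,\theta_N\}$ with $0=\theta_0<\theta_1<\dots<\theta_N=1$. Then for each $n\in\{0,\dots,N-1\}$, exactly one of the following holds: (i) for every $\theta\in(\theta_n,\theta_{n+1})$ and every $x\in F(\delta_\theta)$, $\theta(\delta_x)>\theta$; (ii) for every $\theta\in(\theta_n,\theta_{n+1})$ and every $x\in F(\delta_\theta)$, $\theta(\delta_x)<\theta$.
   Context: Setting. $X$ is a finite set of actions, $Y$ a set of consequences, $Q:X\to\Delta Y$ the true consequence function, and $\{Q_\theta:\theta\in\Theta\}$ the agent's models with $\Theta=[0,1]$. Assumptions 1–2: $Y$ is a compact subset of a Euclidean space; there is a Borel probability measure $\nu$ on $Y$ with $Q(\cdot\mid x),Q_\theta(\cdot\mid x)\ll\nu$, densities $q(\cdot\mid x)$, $q_\theta(\cdot\mid x)$; $\theta\mapsto q_\theta(\cdot\mid x)$ is continuous $Q(\cdot\mid x)$-a.s.; for each $x$ there is $g_x\in L^2(Y,Q(\cdot\mid x))$ with $|\ln(q(y\mid x)/q_\theta(y\mid x))|\le g_x(y)$ for all $\theta$, $Q(\cdot\mid x)$-a.s. Assumption 3: the prior has full support on $\Theta$. Assumption 4: the policy correspondence $F:\Delta\Theta\rightrightarrows X$ (nonempty-valued, $\Delta\Theta$ = Borel probability measures on $\Theta$) is upper hemicontinuous. $\delta_\theta$ is the point mass at $\theta\in\Theta$, $\delta_x\in\Delta X$ the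 point mass at action $x$; for $S\subseteq X$, $\Delta S$ is the set of distributions on $X$ supported in $S$; $F(A)=\bigcup_{\mu\in A}F(\mu)$ for $A\subseteq\Delta\Theta$. KLD: $K(\theta,\sigma)=\sum_x\sigma(x)\int\ln\frac{q(y\mid x)}{q_\theta(y\mid x)}q(y\mid x)\nu(dy)$ for $\sigma\in\Delta X$. Assumption 5 (identifiability): (i) for each $\sigma\in\Delta X$, $K(\cdot,\sigma)$ has a unique minimizer $\theta(\sigma)\in[0,1]$; (ii) for each $\sigma$ with $\theta(\sigma)\in(0,1)$, $K(\cdot,\sigma)$ is twice differentiable at $\theta(\sigma)$ with positive second derivative there. Equilibrium: $\sigma\in\Delta X$ with $\sigma\in\Delta F(\{\delta_{\theta(\sigma)}\})$, i.e. $\sigma$ is supported in $F(\delta_{\theta(\sigma)})$. A model $\theta^*\in[0,1]$ is an equilibrium model if $\theta^*=\theta(\sigma^* )$ for some equilibrium $\sigma^*$; $\Theta^*$ is the set of equilibrium models. *)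

(* Defs.v *)
From HB Require Import structures.
From mathcomp Require Import all_boot all_order all_algebra.
From mathcomp Require Import all_classical all_reals all_analysis.
From mathcomp Require Import matrix_topology matrix_normedtype.
Import Order.TTheory GRing.Theory Num.Theory.
Import numFieldNormedType.Exports.

Set Implicit Arguments.
Unset Strict Implicit.
Unset Printing Implicit Defensive.

Local Open Scope classical_set_scope.
Local Open Scope ring_scope.

Definition euclid (R : realType) (d : nat) :=
  g_sigma_algebraType (@open 'rV[R]_d).

(* The real line as a Borel measurable space; the parameter space
   Theta = [0,1] sits inside it. *)
Notation BorelR R := (measurableTypeR R).

Definition unit_itv (R : realType) : set (BorelR R) := [set t : R | 0 <= t <= 1].
Arguments unit_itv : clear implicits.

Definition inDeltaX (R : realType) (X : finType) (sigma : X -> R) : Prop :=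
  (forall x, 0 <= sigma x) /\ \sum_(x : X) sigma x = 1.

Definition pmass (R : realType) (X : finType) (x : X) : X -> R :=
  fun x' => if x' == x then 1 else 0.

(* Delta Theta : Borel probability measures on Theta = [0,1], represented as
   Borel probability measures on R giving full mass to [0,1]. *)
Definition inDeltaTheta (R : realType)
    (mu : {measure set (BorelR R) -> \bar R}) : Prop :=
  mu setT = 1%E /\ mu (unit_itv R) = 1%E.

Definition KLD (R : realType) (d : nat) (X : finType)
    (nu : {measure set (euclid R d) -> \bar R}) (Y : set (euclid R d))
    (q : X -> euclid R d -> R) (qth : R -> X -> euclid R d -> R)
    (theta : R) (sigma : X -> R) : R :=
  \sum_(x : X) sigma x *
     Rintegral nu Y (fun y => ln (q x y / qth theta x y) * q x y).

Definition unique_minimizer01 (R : realType) (f : R -> R) (t : R) : Prop :=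
  unit_itv R t /\
  (forall s, unit_itv R s -> f t <= f s) /\
  (forall s, unit_itv R s -> f s <= f t -> s = t).

Definition twice_diff_pos2 (R : realType) (f : R -> R) (t : R) : Prop :=
  (\forall s \near t, derivable f s 1) /\
  derivable (derive1 f) t 1 /\
  0 < derive1 (derive1 f) t.

(* Upper hemicontinuity of F : Delta Theta => X, Delta Theta carrying the
   topology of weak convergence (sub-basic neighbourhoods given by finitely
   many continuous test functions on [0,1]) and X the discrete topology
   (so every subset of X is open). *)
Definition weak_nbhd (R : realType) (mu : {measure set (BorelR R) -> \bar R})
    (W : {measure set (BorelR R) -> \bar R} -> Prop) : Prop :=
  exists (n : nat) (f : nat -> R -> R) (e : R),
    0 < e /\
    (forall i, (i < n)%N -> {within unit_itv R, continuous (f i)}) /\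
    (forall mu' : {measure set (BorelR R) -> \bar R}, inDeltaTheta mu' ->
       (forall i, (i < n)%N ->
          `| Rintegral mu' (unit_itv R) (f i)
             - Rintegral mu (unit_itv R) (f i) | < e) ->
       W mu').

Definition uhc (R : realType) (X : finType)
    (F : {measure set (BorelR R) -> \bar R} -> set X) : Prop :=
  forall mu, inDeltaTheta mu ->
  forall V : set X, F mu `<=` V ->
    weak_nbhd mu (fun mu' => F mu' `<=` V).

Definition full_support01 (R : realType)
    (mu : {measure set (BorelR R) -> \bar R}) : Prop :=
  forall O : set R, open O -> (O `&` unit_itv R) !=set0 ->
    (0 < mu (O `&` unit_itv R))%E.

Definition dirac_at (R : realType) (t : R) : {measure set (BorelR R) -> \bar R} :=
  @dirac _ (BorelR R) t R.

Definition equilibrium (R : realType) (X : finType)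
    (F : {measure set (BorelR R) -> \bar R} -> set X)
    (thetaS : (X -> R) -> R) (sigma : X -> R) : Prop :=
  inDeltaX sigma /\ (forall x, 0 < sigma x -> F (dirac_at (thetaS sigma)) x).

Definition equilibrium_models (R : realType) (X : finType)
    (F : {measure set (BorelR R) -> \bar R} -> set X)
    (thetaS : (X -> R) -> R) : set R :=
  [set t | exists sigma, equilibrium F thetaS sigma /\ t = thetaS sigma].

(* Main.v *)
Require Import Defs.
From HB Require Import structures.
From mathcomp Require Import all_boot all_order all_algebra.
From mathcomp Require Import all_classical all_reals all_analysis.
From mathcomp Require Import matrix_topology matrix_normedtype.
Import Order.TTheory GRing.Theory Num.Theory.
Import numFieldNormedType.Exports.
Local Open Scope classical_set_scope.
Local Open Scope ring_scope.
From mathcomp Require Import ring lra measurable_realfun.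
Lemma ed_within (R : realType) (A : set R) (f : R -> R) :
  (forall x, A x -> forall e, 0 < e -> exists2 d, 0 < d &
     forall t, A t -> `|t - x| < d -> `|f t - f x| < e) ->
  {within A, continuous f}.
Proof.
move=> H; apply/subspace_continuousP => x Ax.
apply/cvgrPdist_lt => e e0.
have [d d0 Hd] := H x Ax e e0.
rewrite /within /=; apply/nbhs_ballP; exists d => //= t bt At.
rewrite distrC; apply: Hd => //; move: bt; rewrite /ball /= distrC.
done.
Qed.

Lemma seq_ed (R : realType) (A : set R) (f : R -> R) (x : R) :
  (forall u : nat -> R, (forall n, A (u n)) -> u n @[n --> \oo] --> x ->
     f (u n) @[n --> \oo] --> f x) ->
  forall e, 0 < e -> exists2 d, 0 < d &
     forall t, A t -> `|t - x| < d -> `|f t - f x| < e.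
Proof.
move=> H e e0; apply: contrapT => hno.
have hn : forall n : nat, exists t, A t /\ `|t - x| < n.+1%:R^-1 /\ e <= `|f t - f x|.
  move=> n; apply: contrapT => hn; apply: hno; exists (n.+1%:R^-1) => // t At ht.
  rewrite ltNge; apply/negP => he; apply: hn; exists t; split => //.
have [u hu] := choice hn.
have ucv : u n @[n --> \oo] --> x.
  apply/cvgrPdist_lt => e' e'0.
  have := @cvg_harmonic R; move/cvgrPdist_lt/(_ e' e'0).
  apply: filterS => n; rewrite /harmonic /= sub0r normrN ger0_norm // => hlt.
  have [_ [h2 _]] := hu n; rewrite distrC; exact: lt_trans h2 hlt.
have := H u (fun n => (hu n).1) ucv; move/cvgrPdist_lt/(_ e e0) => ev.
have [n hn'] := filter_ex ev.
have [_ [_ h3]] := hu n; move: hn'; rewrite distrC; rewrite ltNge h3.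
done.
Qed.

Lemma unit_itvE (R : realType) : unit_itv R = `[(0:R), 1]%classic.
Proof. by apply/seteqP; split => t /=; rewrite in_itv. Qed.

Lemma berge (R : realType) (k1 k2 th : R -> R) :
  {within unit_itv R, continuous k1} -> {within unit_itv R, continuous k2} ->
  (forall l, unit_itv R l ->
     unique_minimizer01 (fun t => l * k1 t + (1 - l) * k2 t) (th l)) ->
  forall l0, unit_itv R l0 -> forall e, 0 < e -> exists2 d, 0 < d &
    forall l, unit_itv R l -> `|l - l0| < d -> `|th l - th l0| < e.
Proof.
move=> hk1 hk2 hth l0 ul0 e e0.
pose h l t := l * k1 t + (1 - l) * k2 t.
have hE l t : h l t = k2 t + l * (k1 t - k2 t) by rewrite /h; ring.
have cD : {within unit_itv R, continuous (fun t => `|k1 t - k2 t|)}.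
  by move=> t; apply: cvg_norm; apply: cvgB; [apply: hk1|apply: hk2].
have [M uM HM] : exists2 M, 0 <= M & forall t, unit_itv R t -> `|k1 t - k2 t| <= M.
  have [||c _ Hc] := compact_EVT_max _ _ cD.
  - by exists 0; rewrite /unit_itv /= lexx ler01.
  - by rewrite unit_itvE; exact: segment_compact.
  exists `|k1 c - k2 c| => // t ut; apply: Hc; rewrite inE; exact: ut.
have hcl : forall l, unit_itv R l -> unit_itv R (th l) by move=> l /hth [].
set t0 := th l0.
pose C := unit_itv R `&` ~` ball t0 e.
have [Cne|C0] := pselect (C !=set0); last first.
  exists 1 => // l ul _; apply: contrapT => hne; apply: C0; exists (th l); split.
    exact: hcl.
  by rewrite /ball /= distrC => /hne.
have cC : compact C.
  apply: (subclosed_compact _ (_ : compact (unit_itv R))); last exact: subIsetl.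
  - apply: closedI; last exact/open_closedC/ball_open.
    rewrite unit_itvE; apply: compact_closed; [exact: (@Rhausdorff R)|exact: segment_compact] .
  - by rewrite unit_itvE; exact: segment_compact.
have ch : {within C, continuous (h l0)}.
  apply: (continuous_subspaceW (B := unit_itv R)); first exact: subIsetl.
  move=> t; apply: cvgD; apply: cvgMr; [apply: hk1|apply: hk2].
have [c cC' Hc] := compact_EVT_min Cne cC ch.
move: cC'; rewrite inE => -[uc nbc].
have [_ [Hmin Huniq]] := hth l0 ul0.
have lt0 : h l0 t0 < h l0 c.
  rewrite ltNge; apply/negP => hle.
  have := Huniq c uc hle => ec; apply: nbc; rewrite ec; exact: ballxx.
set g := h l0 c - h l0 t0.
have g0 : 0 < g by rewrite /g subr_gt0.
exists (g / (2 * (M + 1))).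
  apply: divr_gt0 => //; lra.
move=> l ul hl.
have dM : g / (2 * (M + 1)) * M < g / 2.
  have -> : g / (2 * (M + 1)) * M = g / 2 - g / (2 * (M + 1)).
    by field; lra.
  rewrite ltrBlDr ltrDl; apply: divr_gt0 => //; lra.
have key : forall t, unit_itv R t -> `|h l t - h l0 t| < g / 2.
  move=> t ut; rewrite !hE.
  have -> : k2 t + l * (k1 t - k2 t) - (k2 t + l0 * (k1 t - k2 t)) = (l - l0) * (k1 t - k2 t) by ring.
  rewrite normrM.
  apply: le_lt_trans dM; apply: ler_pM => //; first exact: ltW.
  exact: HM.
apply: contrapT => hne.
have Cth : C (th l).
  split; first exact: hcl.
  by rewrite /ball /= distrC; move=> /hne.
have [_ [Hminl _]] := hth l ul.
have h1 := Hminl t0 (hcl l0 ul0).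
have h2 := Hc (th l) (mem_set Cth).
have := key (th l) (hcl l ul); have := key t0 (hcl l0 ul0).
rewrite /g /h in h1 h2 lt0 g0 * => k1' k2'.
move: k1' k2'; rewrite !ltr_norml => /andP[a1 a2] /andP[b1 b2].
lra.
Qed.

Lemma ivt_th (R : realType) (k1 k2 th : R -> R) :
  {within unit_itv R, continuous k1} -> {within unit_itv R, continuous k2} ->
  (forall l, unit_itv R l ->
     unique_minimizer01 (fun t => l * k1 t + (1 - l) * k2 t) (th l)) ->
  forall t, th 0 < t -> t < th 1 -> exists2 l, unit_itv R l & th l = t.
Proof.
move=> hk1 hk2 hth t h0 h1.
have cth : {within `[(0:R), 1], continuous th}.
  rewrite -unit_itvE; apply: ed_within => l0 ul0; exact: berge hth l0 ul0.
have [|l lI thl] := IVT (@ler01 R) cth (v := t).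
- apply/andP; split.
  + by rewrite ge_min (ltW h0).
  + by rewrite le_max (ltW h1) orbT.
by exists l => //; move: lI; rewrite in_itv.
Qed.
Lemma measurable_invR (R : realType) : measurable_fun [set: R] (@GRing.inv R).
Proof.
have -> : [set: R] = [set~ 0] `|` [set 0].
  by apply/seteqP; split => x //= _; case: (eqVneq x 0) => [->|/eqP]; [right|left].
apply/measurable_funU.
- apply: measurableC; exact: measurable_set1.
- exact: measurable_set1.
split; last exact: measurable_fun_set1.
apply: measurable_realfun.open_continuous_measurable_fun.
  apply: closed_openC; apply: compact_closed; [exact: Rhausdorff|exact: compact_set1].
move=> x; rewrite inE /= => /eqP x0; exact: inv_continuous.
Qed.

Lemma mlr (d' : measure_display) (T : measurableType d') (R : realType)
  (Y : set T) (q1 p1 : T -> R) :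
  measurable_fun Y q1 -> measurable_fun Y p1 ->
  measurable_fun Y (fun y => ln (q1 y / p1 y) * q1 y).
Proof.
move=> mq mp.
apply: (measurable_realfun.measurable_funM _ mq).
apply: measurableT_comp; first exact: measurable_realfun.measurable_ln.
apply: (measurable_realfun.measurable_funM mq).
exact: measurableT_comp (measurable_invR R) mp.
Qed.

Lemma within_seq (R : realType) (A : set R) (h : R -> R) (x : R) (u : nat -> R) :
  {within A, continuous h} -> A x -> (forall n, A (u n)) ->
  u n @[n --> \oo] --> x -> h (u n) @[n --> \oo] --> h x.
Proof.
move=> /subspace_continuousP hc Ax hu ux.
apply: cvg_comp (hc x Ax) => P; rewrite /within => /ux [N _ HN].
by exists N => // n /HN; apply; exact: hu.
Qed.

Lemma kseq (d' : measure_display) (T : measurableType d') (R : realType)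
  (nu : {measure set T -> \bar R}) (Y : set T) (mY : measurable Y)
  (q1 : T -> R) (p : R -> T -> R) (g : T -> R)
  (mq : measurable_fun Y q1) (q0 : forall y, Y y -> 0 <= q1 y)
  (iq : (\int[nu]_(y in Y) (q1 y)%:E < +oo)%E)
  (mp : forall t, unit_itv R t -> measurable_fun Y (p t))
  (p0 : forall t y, unit_itv R t -> Y y -> 0 <= p t y)
  (hc : {ae nu, forall y, Y y -> 0 < q1 y ->
     {within unit_itv R, continuous (fun t : R => p t y)}})
  (mg : measurable_fun Y g)
  (ig2 : (\int[nu]_(y in Y) ((g y ^+ 2 * q1 y)%:E) < +oo)%E)
  (hd : forall t : R, unit_itv R t ->
        {ae nu, forall y, Y y -> 0 < q1 y -> `| ln (q1 y / p t y) | <= g y})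
  (u : nat -> R) (t0 : R) (hu : forall n, unit_itv R (u n)) (ht0 : unit_itv R t0)
  (ut : u n @[n --> \oo] --> t0) :
  Rintegral nu Y (fun y => ln (q1 y / p (u n) y) * q1 y) @[n --> \oo] -->
  Rintegral nu Y (fun y => ln (q1 y / p t0 y) * q1 y).
Proof.
pose f_ : nat -> T -> \bar R := fun n y => (ln (q1 y / p (u n) y) * q1 y)%:E.
pose f : T -> \bar R := fun y => (ln (q1 y / p t0 y) * q1 y)%:E.
pose G : T -> \bar R := fun y => (`|g y| * q1 y)%:E.
have mf_ n : measurable_fun Y (f_ n) by have /measurable_EFinP := @mlr _ _ _ _ _ _ mq (mp _ (hu n)).
have mf : measurable_fun Y f by have /measurable_EFinP := @mlr _ _ _ _ _ _ mq (mp _ ht0).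
have mG : measurable_fun Y G.
  have mg' : measurable_fun Y (fun y => `|g y|) by exact: measurableT_comp.
  by have /measurable_EFinP := measurable_realfun.measurable_funM mg' mq.
have ig : nu.-integrable Y G.
  apply/integrableP; split => //.
  have mg2 : measurable_fun Y (fun y => (g y ^+ 2 * q1 y)%:E).
    have := measurable_funM (measurable_funM mg mg) mq; move/measurable_EFinP.
    by rewrite (_ : (fun y => (g y ^+ 2 * q1 y)%:E) = EFin \o ((g \* g) \* q1))//; apply/funext => y; rewrite /= expr2.
  have mq' : measurable_fun Y (fun y => (q1 y)%:E) by exact/measurable_EFinP.
  rewrite (@eq_integral _ _ _ nu Y G); last first.
    by move=> y /[!inE] Yy; rewrite /G abse_EFin ger0_norm // mulr_ge0 ?q0.
  apply: (le_lt_trans (@ge0_le_integral _ _ _ nu Y mY G (fun y => (g y ^+ 2 * q1 y)%:E + (q1 y)%:E)%E _ mG _ _)).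
  - by move=> y Yy; rewrite lee_fin mulr_ge0 ?q0.
  - exact: emeasurable_funD.
  - move=> y Yy; rewrite -EFinD lee_fin.
    have -> : g y ^+ 2 * q1 y + q1 y = (g y ^+ 2 + 1) * q1 y by ring.
    apply: ler_wpM2r; first exact: q0.
    rewrite -(real_normK (num_real (g y))); have := normr_ge0 (g y); nra.
  rewrite ge0_integralD //.
  - exact: lte_add_pinfty.
  all: try by move=> y Yy; rewrite lee_fin mulr_ge0 ?sqr_ge0 ?q0.
  all: try by move=> y Yy; rewrite lee_fin q0.
have AD : {ae nu, forall y n, Y y -> 0 < q1 y -> `| ln (q1 y / p (u n) y) | <= g y}.
  apply: ae_foralln => n; exact: hd.
have f_g : {ae nu, forall y n, Y y -> (`|f_ n y| <= G y)%E}.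
  apply: filterS AD => y H n Yy; rewrite /f_ /G abse_EFin lee_fin normrM.
  have [q00|qpos] := eqVneq (q1 y) 0.
    by rewrite q00 normr0 !mulr0.
  have qp : 0 < q1 y by rewrite lt0r qpos q0.
  rewrite (ger0_norm (q0 _ Yy)); apply: ler_wpM2r; first exact: q0.
  exact: le_trans (H n Yy qp) (ler_norm _).
have f_f : {ae nu, forall y, Y y -> f_ ^~ y @ \oo --> f y}.
  move: hc AD; apply: filterS2 => y hcy ady Yy.
  have [q00|qne] := eqVneq (q1 y) 0.
    rewrite /f /f_ q00; under eq_fun do rewrite mulr0; rewrite mulr0; exact: cvg_cst.
  have qp : 0 < q1 y by rewrite lt0r qne q0.
  have cy := @within_seq _ _ _ _ _ (hcy Yy qp) ht0 hu ut.
  apply: cvg_EFin; first exact: nearW.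
  rewrite /comp /f_ /=.
  have [pz|pnz] := eqVneq (p t0 y) 0.
    rewrite pz invr0 mulr0 ln0 // mul0r.
    apply: cvg_near_cst.
    pose eta := q1 y / expR (`|g y| + 1).
    have eta0 : 0 < eta by rewrite divr_gt0 // expR_gt0.
    move/cvgrPdist_lt: cy => /(_ eta eta0); apply: filterS => n hn.
    have pge := p0 _ _ (hu n) Yy.
    have [->|pn] := eqVneq (p (u n) y) 0; first by rewrite invr0 mulr0 ln0 // mul0r.
    exfalso.
    have ppos : 0 < p (u n) y by rewrite lt0r pn pge.
    move: hn; rewrite pz sub0r normrN ger0_norm // => hn.
    have h1 : expR (`|g y| + 1) < q1 y / p (u n) y.
      rewrite ltr_pdivlMr // mulrC -ltr_pdivlMr ?expR_gt0 //.
    have h2 : `|g y| + 1 < ln (q1 y / p (u n) y).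
      by rewrite -[X in X < _]expRK ltr_ln ?posrE ?expR_gt0 ?divr_gt0.
    have := ady n Yy qp.
    have := ler_norm (ln (q1 y / p (u n) y)); have := ler_norm (g y).
    lra.
  have pp : 0 < p t0 y by rewrite lt0r pnz p0.
  apply: cvgM; last exact: cvg_cst.
  have h : (fun n => q1 y / p (u n) y) @ \oo --> q1 y / p t0 y.
    by apply: cvgM; [exact: cvg_cst|exact: cvgV].
  exact: (cvg_comp _ _ h (continuous_ln (divr_gt0 qp pp))).
have [if_ _ cvgI] := dominated_convergence mY mf_ mf f_f ig f_g.
have fin_f := integrable_fin_num mY if_.
rewrite /Rintegral.
apply: (@fine_cvg _ _ _ _ (fun n => \int[nu]_(y in Y) f_ n y)%E).
by rewrite fineK.
Qed.

Lemma kcont (d' : measure_display) (T : measurableType d') (R : realType)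
  (nu : {measure set T -> \bar R}) (Y : set T) (mY : measurable Y)
  (q1 : T -> R) (p : R -> T -> R) (g : T -> R)
  (mq : measurable_fun Y q1) (q0 : forall y, Y y -> 0 <= q1 y)
  (iq : (\int[nu]_(y in Y) (q1 y)%:E < +oo)%E)
  (mp : forall t, unit_itv R t -> measurable_fun Y (p t))
  (p0 : forall t y, unit_itv R t -> Y y -> 0 <= p t y)
  (hc : {ae nu, forall y, Y y -> 0 < q1 y ->
     {within unit_itv R, continuous (fun t : R => p t y)}})
  (mg : measurable_fun Y g)
  (ig2 : (\int[nu]_(y in Y) ((g y ^+ 2 * q1 y)%:E) < +oo)%E)
  (hd : forall t : R, unit_itv R t ->
        {ae nu, forall y, Y y -> 0 < q1 y -> `| ln (q1 y / p t y) | <= g y}) :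
  {within unit_itv R, continuous
    (fun t => Rintegral nu Y (fun y => ln (q1 y / p t y) * q1 y))}.
Proof.
apply: ed_within => t0 ht0; apply: seq_ed => u hu ut.
exact: (@kseq _ _ _ nu Y mY q1 p g mq q0 iq mp p0 hc mg ig2 hd u t0 hu ht0 ut).
Qed.

Lemma common_d (R : realType) (A : eqType) (P : A -> R -> Prop) (s : seq A) :
  (forall x d d', 0 < d' -> d' <= d -> P x d -> P x d') ->
  (forall x, x \in s -> exists2 d, 0 < d & P x d) ->
  exists2 d, 0 < d & forall x, x \in s -> P x d.
Proof.
move=> mono; elim: s => [|y s IH] H.
  by exists 1 => // x; rewrite in_nil.
have [d1 d10 Hd1] := H y (mem_head _ _).
have [d2 d20 Hd2] := IH (fun x xs => H x (mem_behead (s := y :: s) xs)).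
exists (Num.min d1 d2); first by rewrite lt_min d10 d20.
move=> x; rewrite in_cons => /orP[/eqP ->|xs].
  by apply: mono Hd1; rewrite ?lt_min ?d10 ?d20 // ge_min lexx.
by apply: mono (Hd2 x xs); rewrite ?lt_min ?d10 ?d20 // ge_min lexx orbT.
Qed.
Lemma conn (R : realType) (a b : R) (P Q : R -> Prop) :
  (forall t, a < t < b -> P t \/ Q t) ->
  (forall t, a < t < b -> P t -> Q t -> False) ->
  (forall t, a < t < b -> P t -> exists2 d, 0 < d &
      forall s, a < s < b -> `|s - t| < d -> P s) ->
  (forall t, a < t < b -> Q t -> exists2 d, 0 < d &
      forall s, a < s < b -> `|s - t| < d -> Q s) ->
  forall t1 t2, a < t1 < b -> a < t2 < b -> t1 <= t2 -> P t1 -> Q t2 -> False.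
Proof.
move=> cov dis oP oQ t1 t2 h1 h2 le12 P1 Q2.
pose E := [set t | (t1 <= t <= t2) /\ P t].
have E1 : E t1 by split; [rewrite lexx le12 | ].
have ubE : ubound E t2 by move=> t [/andP[_ ?] _].
have hsE : has_sup E by split; [exists t1 | exists t2].
set s := sup E.
have hs1 : t1 <= s by have := sup_upper_bound hsE E1.
have hs2 : s <= t2 by apply: sup_le_ub; [exists t1|].
move: h1 h2 => /andP[a1 b1] /andP[a2 b2].
have hs : a < s < b by apply/andP; split; lra.
case: (cov s hs) => [Ps|Qs].
- have [d d0 Hd] := oP s hs Ps.
  have st2 : s < t2.
    rewrite lt_neqAle hs2 andbT; apply/negP => /eqP est.
    by apply: (dis t2); [apply/andP; split|rewrite -est|].
  pose r := s + Num.min d (t2 - s) / 2.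
  have m0 : 0 < Num.min d (t2 - s) by rewrite lt_min d0 subr_gt0 st2.
  have md : Num.min d (t2 - s) <= d by rewrite ge_min lexx.
  have mt : Num.min d (t2 - s) <= t2 - s by rewrite ge_min lexx orbT.
  have Er : E r.
    split; first (apply/andP; split; rewrite /r; lra).
    apply: Hd; first (apply/andP; split; rewrite /r; lra).
    rewrite /r addrC addKr ger0_norm; lra.
  have := sup_upper_bound hsE Er; rewrite -/s /r; lra.
- have [d d0 Hd] := oQ s hs Qs.
  have [r [/andP[r1 r2] Pr] sr] := sup_adherent d0 hsE.
  have rs : r <= s by have := sup_upper_bound hsE (x := r); apply; split => //; apply/andP.
  apply: (dis r); [apply/andP; split; lra|exact: Pr|].
  apply: Hd; first (apply/andP; split; lra).
  rewrite distrC ger0_norm; rewrite -/s in sr; lra.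
Qed.

Lemma within_ed (R : realType) (A : set R) (f : R -> R) (x : R) :
  {within A, continuous f} -> A x -> forall e, 0 < e -> exists2 d, 0 < d &
     forall t, A t -> `|t - x| < d -> `|f t - f x| < e.
Proof.
move=> /subspace_continuousP hc Ax e e0.
have := hc x Ax; move/cvgrPdist_lt/(_ e e0); rewrite /within.
move=> /nbhs_ballP [d d0 Hd]; exists d => // t At ht.
rewrite distrC; apply: Hd => //; rewrite /ball /= distrC //.
Qed.

Lemma pmass_sumM (R : realType) (X : finType) (x : X) (c : X -> R) :
  \sum_(z : X) pmass R x z * c z = c x.
Proof.
rewrite (bigD1 x) //= /pmass eqxx mul1r big1 ?addr0 // => z /negbTE ->.
by rewrite mul0r.
Qed.

Lemma pmass_sum1 (R : realType) (X : finType) (x : X) :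
  \sum_(z : X) pmass R x z = 1.
Proof.
have := @pmass_sumM R X x (fun=> (1 : R)); under eq_bigr do rewrite mulr1; done.
Qed.

Lemma pmass_in (R : realType) (X : finType) (x : X) : inDeltaX (pmass R x).
Proof.
split; last exact: pmass_sum1.
by move=> z; rewrite /pmass; case: ifP.
Qed.

Lemma dirac_in (R : realType) (t : R) : unit_itv R t -> inDeltaTheta (dirac_at t).
Proof.
move=> ut; split; rewrite /dirac_at /dirac /=.
  by rewrite diracT.
by rewrite (@diracE _ (BorelR R)) mem_set.
Qed.

Lemma dirac_Rint (R : realType) (f : R -> R) (s : R) :
  {within unit_itv R, continuous f} -> unit_itv R s ->
  Rintegral (dirac_at s) (unit_itv R) f = f s.
Proof.
move=> fc us.
have mU : measurable (unit_itv R) by rewrite unit_itvE; exact: measurable_itv.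
have mf : measurable_fun (unit_itv R) f by exact: subspace_continuous_measurable_fun.
rewrite /Rintegral /dirac_at integral_dirac //; last exact/measurable_EFinP.
by rewrite (@diracE _ (BorelR R)) mem_set // mul1e.
Qed.

Theorem mainTheorem11
  (R : realType) (X : finType) (d : nat)
  (* Assumption 1: Y compact subset of Euclidean space R^d *)
  (Y : set (euclid R d))
  (hYc : compact (Y : set 'rV[R]_d))
  (hYm : measurable Y)
  (* Assumption 2: Borel probability measure nu on Y *)
  (nu : {measure set (euclid R d) -> \bar R})
  (hnuT : nu setT = 1%E) (hnuY : nu Y = 1%E)
  (* true consequence function Q, given by its densities q(.|x) w.r.t. nu *)
  (q : X -> euclid R d -> R)
  (hq_meas : forall x, measurable_fun Y (q x))
  (hq_ge0 : forall x y, Y y -> 0 <= q x y)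
  (hq_1 : forall x, (\int[nu]_(y in Y) (q x y)%:E = 1)%E)
  (* models Q_theta, theta in [0,1], given by their densities *)
  (qth : R -> X -> euclid R d -> R)
  (hqth_meas : forall (t : R) x, unit_itv R t -> measurable_fun Y (qth t x))
  (hqth_ge0 : forall (t : R) x y, unit_itv R t -> Y y -> 0 <= qth t x y)
  (hqth_1 : forall (t : R) x, unit_itv R t ->
     (\int[nu]_(y in Y) (qth t x y)%:E = 1)%E)
  (* theta |-> q_theta(y|x) continuous, Q(.|x)-a.s. *)
  (hcont : forall x, {ae nu, forall y, Y y -> 0 < q x y ->
     {within unit_itv R, continuous (fun t : R => qth t x y)}})
  (* L^2(Q(.|x)) domination of the log-likelihood ratio *)
  (hdom : forall x, exists g : euclid R d -> R,
     measurable_fun Y g /\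
     (\int[nu]_(y in Y) ((g y ^+ 2 * q x y)%:E) < +oo)%E /\
     (forall t : R, unit_itv R t ->
        {ae nu, forall y, Y y -> 0 < q x y ->
           `| ln (q x y / qth t x y) | <= g y}))
  (* Assumption 3: a prior with full support on Theta *)
  (mu0 : {measure set (BorelR R) -> \bar R})
  (hmu0 : inDeltaTheta mu0) (hmu0supp : full_support01 mu0)
  (* Assumption 4: nonempty-valued upper hemicontinuous policy correspondence *)
  (F : {measure set (BorelR R) -> \bar R} -> set X)
  (hFne : forall mu, inDeltaTheta mu -> F mu !=set0)
  (hFuhc : uhc F)
  (* Assumption 5: identifiability; thetaS sigma = theta(sigma) *)
  (thetaS : (X -> R) -> R)
  (hA5i : forall sigma, inDeltaX sigma ->
     unique_minimizer01 (fun t => KLD nu Y q qth t sigma) (thetaS sigma))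
  (hA5ii : forall sigma, inDeltaX sigma -> 0 < thetaS sigma < 1 ->
     twice_diff_pos2 (fun t => KLD nu Y q qth t sigma) (thetaS sigma))
  (* Theta^* finite *)
  (hfin : finite_set (equilibrium_models F thetaS)) :
  (* for consecutive points a < b of Theta^* u {0,1} *)
  forall a b : R,
    (equilibrium_models F thetaS `|` [set 0; 1]) a ->
    (equilibrium_models F thetaS `|` [set 0; 1]) b ->
    a < b ->
    (forall c, (equilibrium_models F thetaS `|` [set 0; 1]) c -> ~ (a < c < b)) ->
    let P_up := forall t, a < t < b ->
                  forall x, F (dirac_at t) x -> thetaS (pmass R x) > t in
    let P_down := forall t, a < t < b ->
                  forall x, F (dirac_at t) x -> thetaS (pmass R x) < t in
    (P_up /\ ~ P_down) \/ (P_down /\ ~ P_up).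
Proof.
move=> a b Sa Sb ab cons P_up P_down; rewrite /P_up /P_down {P_up P_down}.
pose k x t := Rintegral nu Y (fun y => ln (q x y / qth t x y) * q x y).
have hk : forall x, {within unit_itv R, continuous (k x)}.
  move=> x; have [g [mg [ig2 hd]]] := hdom x.
  apply: (@kcont _ _ _ nu Y hYm (q x) (fun t => qth t x) g (hq_meas x)
    (hq_ge0 x) _ (fun t ht => hqth_meas t x ht) (fun t y => hqth_ge0 t x y)
    (hcont x) mg ig2 hd).
  by rewrite hq_1 ltry.
have KLDE : forall s t, KLD nu Y q qth t s = \sum_z s z * k z t by [].
have thin : forall s, inDeltaX s -> unit_itv R (thetaS s) by move=> s /hA5i [].
have Sunit : forall c, (equilibrium_models F thetaS `|` [set 0; 1]) c -> unit_itv R c.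
  move=> c [[s [[hs _] ->]]|[->|->]]; first exact: thin.
  - by rewrite /unit_itv /= lexx ler01.
  - by rewrite /unit_itv /= lexx ler01.
have /andP[a0 _] := Sunit a Sa; have /andP[_ b1] := Sunit b Sb.
have Iunit : forall t, a < t < b -> unit_itv R t.
  move=> t /andP[h1 h2]; apply/andP; split; lra.
have notS : forall t, a < t < b -> ~ equilibrium_models F thetaS t.
  by move=> t ht hS; apply: (cons t) => //; left.
have eqS : forall s t, inDeltaX s -> thetaS s = t ->
    (forall z, 0 < s z -> F (dirac_at t) z) -> equilibrium_models F thetaS t.
  by move=> s t hs ht hF; exists s; split => //; split => //; rewrite ht.
have noeq : forall t x, a < t < b -> F (dirac_at t) x -> thetaS (pmass R x) <> t.
  move=> t x ht hx he; apply: (notS t ht); apply: (eqS (pmass R x)) => //.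
    exact: pmass_in.
  move=> z; rewrite /pmass; case: eqP => [->//|_]; by rewrite ltxx.
have mix : forall t x x', a < t < b -> F (dirac_at t) x -> F (dirac_at t) x' ->
    t < thetaS (pmass R x) -> thetaS (pmass R x') < t -> False.
  move=> t x x' ht hx hx' h1 h2.
  pose sg l := fun z => l * pmass R x z + (1 - l) * pmass R x' z.
  have sgin : forall l, unit_itv R l -> inDeltaX (sg l).
    move=> l /andP[l0 l1]; split.
      move=> z; rewrite /sg /pmass; apply: addr_ge0; apply: mulr_ge0;
        rewrite ?subr_ge0 //; by case: ifP.
    rewrite /sg big_split /= -!big_distrr /= !pmass_sum1.
    by rewrite !mulr1 addrC subrK.
  have sgK : forall l t', KLD nu Y q qth t' (sg l) = l * k x t' + (1 - l) * k x' t'.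
    move=> l t'; rewrite KLDE /sg.
    under eq_bigr do rewrite mulrDl -!mulrA.
    by rewrite big_split /= -!big_distrr /= !pmass_sumM.
  have hth : forall l, unit_itv R l ->
      unique_minimizer01 (fun t' => l * k x t' + (1 - l) * k x' t') (thetaS (sg l)).
    move=> l ul; have := hA5i _ (sgin l ul).
    by rewrite (_ : (fun t' => KLD nu Y q qth t' (sg l)) =
      (fun t' => l * k x t' + (1 - l) * k x' t')) //; apply/funext => t'; rewrite sgK.
  have sg0 : sg 0 = pmass R x' by apply/funext => z; rewrite /sg mul0r add0r subr0 mul1r.
  have sg1 : sg 1 = pmass R x by apply/funext => z; rewrite /sg mul1r subrr mul0r addr0.
  have th0 : thetaS (sg 0) < t by rewrite sg0.
  have th1 : t < thetaS (sg 1) by rewrite sg1.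
  have [l ul thl] := @ivt_th R (k x) (k x') (fun l => thetaS (sg l)) (hk x) (hk x') hth t
    th0 th1.
  apply: (notS t ht); apply: (eqS (sg l)) => //; first exact: sgin.
  move=> z hz; case: (eqVneq z x) => [->//|zx]; case: (eqVneq z x') => [->//|zx'].
  by move: hz; rewrite /sg /pmass (negbTE zx) (negbTE zx') !mulr0 addr0 ltxx.
pose up t := forall x, F (dirac_at t) x -> t < thetaS (pmass R x).
pose dn t := forall x, F (dirac_at t) x -> thetaS (pmass R x) < t.
have Fne : forall t, a < t < b -> exists x, F (dirac_at t) x.
  move=> t ht; have [x hx] := hFne (dirac_at t) (@dirac_in _ _ (Iunit t ht)).
  by exists x.
have dich : forall t, a < t < b -> up t \/ dn t.
  move=> t ht; case: (pselect (up t)) => [|nup]; [by left|right].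
  have [x0 [hx0 hlt]] : exists x0, F (dirac_at t) x0 /\ thetaS (pmass R x0) < t.
    apply: contrapT => hno; apply: nup => x hx.
    case: (ltgtP t (thetaS (pmass R x))) => [//|hl|he].
    - by exfalso; apply: hno; exists x.
    - by exfalso; exact: (noeq t x ht hx (esym he)).
  move=> x hx; case: (ltgtP t (thetaS (pmass R x))) => [hl|//|he].
  - by exfalso; exact: (mix t x x0 ht hx hx0 hl hlt).
  - by exfalso; exact: (noeq t x ht hx (esym he)).
have disj : forall t, a < t < b -> up t -> dn t -> False.
  move=> t ht U D; have [x hx] := Fne t ht.
  by have := lt_trans (U x hx) (D x hx); rewrite ltxx.
have nbh : forall t, a < t < b -> exists2 d, 0 < d & forall s, a < s < b ->
    `|s - t| < d -> F (dirac_at s) `<=` F (dirac_at t).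
  move=> t ht.
  have dt := @dirac_in _ _ (Iunit t ht).
  have [n [f [e [e0 [fc W]]]]] := hFuhc (dirac_at t) dt (F (dirac_at t)) (@subset_refl _ _).
  have [d1 d10 Hd1] : exists2 d, 0 < d & forall i, i \in iota 0 n ->
      forall s, unit_itv R s -> `|s - t| < d -> `|f i s - f i t| < e.
    apply: common_d.
      move=> i r r' _ hrr H s us hs; apply: H => //; exact: lt_le_trans hs hrr.
    move=> i; rewrite mem_iota add0n => /andP[_ hi].
    exact: (@within_ed _ _ _ _ (fc i hi) (Iunit t ht) _ e0).
  exists d1 => // s hs hst.
  apply: W; first exact: @dirac_in _ _ (Iunit s hs).
  move=> i hi; rewrite !dirac_Rint //; try exact: fc i hi; try exact: Iunit.
  by apply: Hd1 => //; [rewrite mem_iota add0n | exact: Iunit].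
have oup : forall t, a < t < b -> up t -> exists2 d, 0 < d &
    forall s, a < s < b -> `|s - t| < d -> up s.
  move=> t ht ut.
  have [d1 d10 Hd1] := nbh t ht.
  have [d2 d20 Hd2] : exists2 d, 0 < d & forall x, x \in enum X ->
      F (dirac_at t) x -> d <= thetaS (pmass R x) - t.
    apply: common_d.
      by move=> x r r' _ hrr H hx; apply: le_trans hrr (H hx).
    move=> x _; case: (pselect (F (dirac_at t) x)) => [hx|nx].
      by exists (thetaS (pmass R x) - t) => //; rewrite subr_gt0 ut.
    by exists 1.
  exists (Num.min d1 d2); first by rewrite lt_min d10 d20.
  move=> s hs; rewrite lt_min => /andP[hs1 hs2] x hx.
  have hxt := Hd1 s hs hs1 x hx.
  have := Hd2 x (mem_enum _ x) hxt.
  move: hs2; rewrite ltr_norml => /andP[_ ?]; lra.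
have odn : forall t, a < t < b -> dn t -> exists2 d, 0 < d &
    forall s, a < s < b -> `|s - t| < d -> dn s.
  move=> t ht ut.
  have [d1 d10 Hd1] := nbh t ht.
  have [d2 d20 Hd2] : exists2 d, 0 < d & forall x, x \in enum X ->
      F (dirac_at t) x -> d <= t - thetaS (pmass R x).
    apply: common_d.
      by move=> x r r' _ hrr H hx; apply: le_trans hrr (H hx).
    move=> x _; case: (pselect (F (dirac_at t) x)) => [hx|nx].
      by exists (t - thetaS (pmass R x)) => //; rewrite subr_gt0 ut.
    by exists 1.
  exists (Num.min d1 d2); first by rewrite lt_min d10 d20.
  move=> s hs; rewrite lt_min => /andP[hs1 hs2] x hx.
  have hxt := Hd1 s hs hs1 x hx.
  have := Hd2 x (mem_enum _ x) hxt.
  move: hs2; rewrite ltr_norml => /andP[? _]; lra.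
have cross : forall t1 t2, a < t1 < b -> a < t2 < b -> up t1 -> dn t2 -> False.
  move=> t1 t2 h1 h2 u1 d2; case: (leP t1 t2) => le.
    exact: (@conn R a b up dn dich disj oup odn t1 t2 h1 h2 le u1 d2).
  apply: (@conn R a b dn up _ _ odn oup t2 t1 h2 h1 (ltW le) d2 u1).
    by move=> t ht; case: (dich t ht); auto.
  by move=> t ht h h'; exact: (disj t ht h' h).
pose m := (a + b) / 2.
have hm : a < m < b by apply/andP; split; rewrite /m; lra.
case: (dich m hm) => [um|dm].
- left; split.
  + move=> t ht; case: (dich t ht) => // dt.
    by exfalso; exact: (cross m t hm ht um dt).
  + by move=> hd; exact: (disj m hm um (hd m hm)).
- right; split.
  + move=> t ht; case: (dich t ht) => // ut.
    by exfalso; exact: (cross t m ht hm ut dm).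
  + by move=> hu; exact: (disj m hm (hu m hm) dm).
Qed.
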